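(* Let $n\geq4$, $D_n=\{x\in\mathbb{Z}^n:\sum_i x_i\equiv0\bmod2\}$, $\mathcal{P}$ its Voronoi region with vertex set $V_{\mathcal{P}}$, and $D_n^\#$ the dual lattice. Let $\tilde G$ be the Cayley graph on $\frac12D_n^\#$ with generating set $\frac12V_{\mathcal{P}}$, with graph distance $\tilde d$. Then for all $u_1,u_2\in\frac12D_n^\#$, $\tilde d(u_1,u_2)=2$ implies $\Vert u_1-u_2\Vert_{\mathcal{P}}=1$.
   Context: The Voronoi region of a lattice $\Lambda\subset\mathbb{R}^n$ is $\{z:\langle z-x,z-x\rangle\geq\langle z,z\rangle\ \forall x\in\Lambda\}$; $D_n^\#=\{y:\langle x,y\rangle\in\mathbb{Z}\ \forall x\in D_n\}$. $\Vert x\Vert_{\mathcal{P}}=\inf\{\lambda\geq0:x\in\lambda\mathcal{P}\}$, which for this $\mathcal{P}$ equals $\max_{i\neq j}(|x_i|+|x_j|)$. It is known that $V_{\mathcal{P}}$ consists of the $2n$ vectors $\pm e_i$ and the $2^n$ vectors $(\pm\frac12,\dots,\pm\frac12)$. In the Cayley graph, $x,y$ are adjacent iff $x-y\in\frac12V_{\mathcal{P}}$. *)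

(* Defs.v *)
From HB Require Import structures.
From mathcomp Require Import all_boot all_order all_algebra.
Set Implicit Arguments. Unset Strict Implicit. Unset Printing Implicit Defensive.
Import Order.TTheory GRing.Theory Num.Theory.
Local Open Scope ring_scope.

Section Defs.
Variables (R : realFieldType) (n : nat).
Notation vec := 'rV[R]_n.

Definition is_intR (r : R) : Prop := exists z : int, r = z%:~R.

Definition dotv (x y : vec) : R := \sum_(i < n) x 0 i * y 0 i.

Definition Dn (x : vec) : Prop :=
  exists z : 'I_n -> int, (forall i, x 0 i = (z i)%:~R) /\ (2 %| \sum_(i < n) z i)%Z.

Definition Dn_dual (y : vec) : Prop := forall x, Dn x -> is_intR (dotv x y).

Definition voronoiDn (z : vec) : Prop :=
  forall x, Dn x -> dotv (z - x) (z - x) >= dotv z z.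

Definition vertexDn (v : vec) : Prop :=
  voronoiDn v /\
  forall a b t, voronoiDn a -> voronoiDn b -> 0 < t < 1 ->
    v = t *: a + (1 - t) *: b -> a = b.

Definition half (S : vec -> Prop) (x : vec) : Prop := S (2%:R *: x).

Definition Gvert := half Dn_dual.
Definition Gadj (x y : vec) : Prop := half vertexDn (x - y).

Definition walk (k : nat) (u v : vec) : Prop :=
  exists w : nat -> vec,
    [/\ w 0%N = u, w k = v, (forall i, (i <= k)%N -> Gvert (w i))
      & forall i, (i < k)%N -> Gadj (w i) (w i.+1)].

Definition gdist_eq (u v : vec) (k : nat) : Prop :=
  walk k u v /\ forall m, (m < k)%N -> ~ walk m u v.

Definition in_scaled (l : R) (x : vec) : Prop :=
  exists z, voronoiDn z /\ x = l *: z.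

Definition normP_eq (x : vec) (c : R) : Prop :=
  (forall l, 0 <= l -> in_scaled l x -> c <= l) /\
  (forall b, (forall l, 0 <= l -> in_scaled l x -> b <= l) -> b <= c).

End Defs.

(* Main.v *)
Require Import Defs.
From mathcomp Require Import all_boot all_order all_algebra zify ring lra.
Import Order.TTheory GRing.Theory Num.Theory.
Local Open Scope ring_scope.
Set Implicit Arguments. Unset Strict Implicit. Unset Printing Implicit Defensive.

Lemma ex_argmax (R : realFieldType) (I : finType) (P : {pred I}) (f : I -> R) i0 :
  P i0 -> exists2 m, P m & forall j, P j -> f j <= f m.
Proof.
move=> Pi0; case: (@Order.TotalTheory.arg_maxP _ R I i0 P f Pi0) => m Pm H.
by exists m => // j /H.
Qed.

Lemma sum_two (V : nmodType) n (i j : 'I_n) (a b : V) : i != j ->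
  \sum_l (if l == i then a else if l == j then b else 0) = a + b.
Proof.
move=> ij; rewrite (bigD1 i) //= eqxx (bigD1 j) /=; last by rewrite eq_sym.
rewrite eq_sym (negbTE ij) eqxx big1 ?addr0 // => l /andP[li lj].
by rewrite (negbTE li) (negbTE lj).
Qed.

Definition Pp (R : realFieldType) n (z : 'rV[R]_n) :=
  forall i j : 'I_n, i != j -> `|z 0 i| + `|z 0 j| <= 1.

Lemma dot_expand (R : realFieldType) n (z x : 'rV[R]_n) :
  dotv (z - x) (z - x) - dotv z z = \sum_i (x 0 i ^+ 2 - 2 * z 0 i * x 0 i).
Proof.
rewrite /dotv -sumrB; apply: eq_bigr => i _; rewrite !mxE; ring.
Qed.

Lemma voronoiE (R : realFieldType) n (z : 'rV[R]_n) :
  voronoiDn z <-> forall x, Dn x -> 0 <= \sum_i (x 0 i ^+ 2 - 2 * z 0 i * x 0 i).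
Proof.
split=> H x /H; by rewrite -dot_expand subr_ge0.
Qed.

Lemma vor_pair (R : realFieldType) n (z : 'rV[R]_n) (i j : 'I_n) (s t : int) :
  voronoiDn z -> i != j -> (2 %| s + t)%Z ->
  0 <= (s%:~R ^+ 2 - 2 * z 0 i * s%:~R) + (t%:~R ^+ 2 - 2 * z 0 j * t%:~R).
Proof.
move=> /voronoiE H ij st.
pose w := fun l : 'I_n => if l == i then s else if l == j then t else 0.
have Dx : Dn (\row_l (w l)%:~R : 'rV[R]_n).
  exists w; split; first by move=> l; rewrite mxE.
  by rewrite /w sum_two.
have := H _ Dx.
rewrite -(sum_two _ _ ij).
have -> // : \sum_i0 ((\row_l (w l)%:~R : 'rV[R]_n) 0 i0 ^+ 2 -
     2 * z 0 i0 * (\row_l (w l)%:~R : 'rV[R]_n) 0 i0) =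
  \sum_l (if l == i then (s%:~R ^+ 2 - 2 * z 0 i * s%:~R) else
     if l == j then (t%:~R ^+ 2 - 2 * z 0 j * t%:~R) else 0).
apply: eq_bigr => l _; rewrite mxE /w.
case: eqP => [->|_]; first by [].
case: eqP => [->|_]; first by [].
by rewrite expr0n /= mulr0 subr0.
Qed.

Lemma normD_le1 (R : realFieldType) (a b : R) :
  a + b <= 1 -> a - b <= 1 -> - a + b <= 1 -> - a - b <= 1 -> `|a| + `|b| <= 1.
Proof.
case: (lerP 0 a) => ha; case: (lerP 0 b) => hb;
  rewrite ?(ger0_norm ha) ?(ger0_norm hb) ?(ltr0_norm ha) ?(ltr0_norm hb); lra.
Qed.

Lemma vor_Pp (R : realFieldType) n (z : 'rV[R]_n) : voronoiDn z -> Pp z.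
Proof.
move=> Hz i j ij.
have h1 := vor_pair Hz ij (s:=1) (t:=1) isT.
have h2 := vor_pair Hz ij (s:=1) (t:=-1) isT.
have h3 := vor_pair Hz ij (s:=-1) (t:=1) isT.
have h4 := vor_pair Hz ij (s:=-1) (t:=-1) isT.
rewrite ?rmorphN ?rmorph1 in h1 h2 h3 h4.
apply: normD_le1; lra.
Qed.

Lemma other_idx n (hn : (1 < n)%N) (l : 'I_n) : exists j : 'I_n, j != l.
Proof.
have h0 : (0 < n)%N by lia.
case: (eqVneq l (Ordinal h0)) => [->|ne]; last by exists (Ordinal h0); rewrite eq_sym.
by exists (Ordinal hn); apply/eqP => /(congr1 val).
Qed.

Lemma term_bound (R : realFieldType) (w : int) (zl sl : R) :
  `|zl| = sl -> sl <= 1 ->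
  ((w %% 2)%Z)%:~R * (1 - 2 * sl) <= (w%:~R) ^+ 2 - 2 * zl * w%:~R.
Proof.
move=> <- hs.
have r01 : ((w %% 2)%Z = 0) \/ ((w %% 2)%Z = 1) by lia.
have hzx : zl * w%:~R <= `|zl| * `|w%:~R : R|.
  by rewrite -normrM ler_norm.
have hsq : (w%:~R : R) ^+ 2 = `|w%:~R : R| ^+ 2 by rewrite real_normK ?num_real.
rewrite hsq -intr_norm in hzx *.
have hs0 : 0 <= `|zl| by [].
have hy0 : (0 : R) <= (`|w| : int)%:~R by rewrite ler0z.
case: r01 => hr; rewrite hr.
  have : (`|w| = 0 :> int) \/ (2 <= `|w| :> int) by lia.
  case=> [h0 | h2].
    move: hzx hy0; rewrite h0 (_ : (0:int)%:~R = 0 :> R) //.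
    move=> hzx _; rewrite mul0r expr0n /= ?mulr0 in hzx *; lra.
  have : (2 : R) <= (`|w| : int)%:~R by rewrite (_ : 2 = 2%:~R) // ler_int.
  move: hzx hy0; move: (`|w| : int)%:~R => y hzx hy0 hy; rewrite mul0r; nra.
have : (1 <= `|w| :> int) by lia.
move=> h1.
have : (1 : R) <= (`|w| : int)%:~R by rewrite (_ : 1 = 1%:~R) // ler_int.
move: hzx hy0; move: (`|w| : int)%:~R => y hzx hy0 hy; rewrite mul1r; nra.
Qed.

Lemma key_sum (R : realFieldType) n (r : 'I_n -> int) (s : 'I_n -> R) :
  (forall l, r l = 0 \/ r l = 1) -> (2 %| \sum_l r l)%Z ->
  (forall l, 0 <= s l) -> (forall i j, i != j -> s i + s j <= 1) ->
  0 <= \sum_l (r l)%:~R * (1 - 2 * s l).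
Proof.
move=> r01 hdiv s0 hpair.
have e1 : (1 : int)%:~R = 1 :> R by [].
have e0 : (0 : int)%:~R = 0 :> R by [].
case: (boolP [exists k, (r k == 1) && (1/2 < s k)]).
  case/existsP => k /andP[/eqP rk sk].
  have others : forall i, i != k -> s i < 1/2.
    move=> i ik; have := hpair i k ik; lra.
  have [j jk rj] : exists2 j, j != k & r j = 1.
    case: (boolP [exists j, (j != k) && (r j == 1)]) =>
      [/existsP [j /andP[jk /eqP rj]] | /existsPn H]; first by exists j.
    exfalso; move: hdiv; rewrite (bigD1 k) //= big1 ?rk //.
    move=> i ik; have := H i; rewrite ik /=.
    by case: (r01 i) => ->.
  rewrite (bigD1 k) //= (bigD1 j) /=; last by rewrite jk.
  rewrite rk rj e1 !mul1r.
  have : 0 <= \sum_(i | (i != k) && (i != j)) (r i)%:~R * (1 - 2 * s i).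
    apply: sumr_ge0 => i /andP[ik _]; have := others i ik.
    by case: (r01 i) => ->; rewrite ?e0 ?e1 ?mul0r ?mul1r //; lra.
  have := hpair j k jk; lra.
move/existsPn => H; apply: sumr_ge0 => l _.
case: (r01 l) => rl; rewrite rl ?e0 ?e1 ?mul0r ?mul1r //.
have := H l; rewrite rl eqxx /= -leNgt; lra.
Qed.

Lemma Pp_vor (R : realFieldType) n (hn : (1 < n)%N) (z : 'rV[R]_n) :
  Pp z -> voronoiDn z.
Proof.
move=> hz; apply/voronoiE => x [w [xw ev]].
have s1 : forall l, `|z 0 l| <= 1.
  move=> l; have [j jl] := other_idx hn l; have := hz j l jl.
  have := normr_ge0 (z 0 j); lra.
apply: le_trans (key_sum (r := fun l => (w l %% 2)%Z) (s := fun l => `|z 0 l|) _ _ _ _) _.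
- move=> l; lia.
- have e : \sum_l w l = (\sum_l (w l %/ 2)%Z) * 2 + \sum_l (w l %% 2)%Z.
    by rewrite mulr_suml -big_split; apply: eq_bigr => l _; apply: divz_eq.
  move: ev; rewrite e; move: (\sum_l _) (\sum_l _) => a b; lia.
- by move=> l.
- exact: hz.
apply: ler_sum => l _; rewrite xw; exact: term_bound.
Qed.

Lemma third_idx n (hn : (2 < n)%N) (p q : 'I_n) : exists l : 'I_n, (l != p) && (l != q).
Proof.
have h0 : (0 < n)%N by lia. have h1 : (1 < n)%N by lia.
case: (boolP ((Ordinal h0 != p) && (Ordinal h0 != q))) => [h|]; first by exists (Ordinal h0).
case: (boolP ((Ordinal h1 != p) && (Ordinal h1 != q))) => [h|]; first by exists (Ordinal h1).
rewrite -!val_eqE /= => H1 H0; exists (Ordinal hn); rewrite -!val_eqE /=.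
move: H1 H0; case: p q => [p hp] [q hq] /=; lia.
Qed.

Lemma sqr_of_norm (R : realFieldType) (x : R) : x ^+ 2 = `|x| ^+ 2.
Proof. by rewrite real_normK ?num_real. Qed.

Lemma pert1 (R : realFieldType) n (v : 'rV[R]_n) (i : 'I_n) (d : R) :
  Pp v -> (forall q, q != i -> `|v 0 i| + `|d| + `|v 0 q| <= 1) ->
  Pp (\row_l (v 0 l + (if l == i then d else 0))).
Proof.
move=> hv hd p q pq; rewrite !mxE.
case: (eqVneq p i) => [epi|pi]; case: (eqVneq q i) => [eqi|qi].
- by move: pq; rewrite epi eqi eqxx.
- rewrite addr0 epi; have := hd q qi; have := ler_normD (v 0 i) d; lra.
- rewrite addr0 eqi; have := hd p pi; have := ler_normD (v 0 i) d; lra.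
- rewrite !addr0; exact: hv.
Qed.

Lemma conv1 (R : realFieldType) (x y t : R) :
  0 < t < 1 -> x <= 1 -> y <= 1 -> t * x + (1 - t) * y = 1 -> x = 1.
Proof. move=> /andP[t0 t1] hx hy h; nra. Qed.

Lemma vert_L1 (R : realFieldType) n (hn : (1 < n)%N) (v : 'rV[R]_n) :
  vertexDn v -> forall i, exists2 j, j != i & `|v 0 i| + `|v 0 j| = 1.
Proof.
move=> [hv hext] i; have hP := vor_Pp hv.
case: (boolP [exists j, (j != i) && (`|v 0 i| + `|v 0 j| == 1)]) =>
  [/existsP [j /andP[ji /eqP e]] | /existsPn H]; first by exists j.
exfalso.
have [j0 j0i] := other_idx hn i.
have [m mi mmax] := ex_argmax (P := fun j => j != i) (fun j => `|v 0 j|) j0i.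
have hm := hP m i mi.
have hm' : `|v 0 i| + `|v 0 m| != 1 by have := H m; rewrite mi.
have hlt : `|v 0 i| + `|v 0 m| < 1 by rewrite lt_neqAle hm' /= addrC.
set e := (1 - `|v 0 i| - `|v 0 m|) / 2.
have e0 : 0 < e by rewrite /e; lra.
have hd : forall d : R, `|d| = e -> forall q, q != i -> `|v 0 i| + `|d| + `|v 0 q| <= 1.
  move=> d -> q qi; have := mmax q qi; rewrite /e /=; lra.
have hA := Pp_vor hn (pert1 hP (hd e (gtr0_norm e0))).
have hB := Pp_vor hn (pert1 hP (hd (- e) ltac:(by rewrite normrN gtr0_norm))).
have ht : 0 < (1/2 : R) < 1 by apply/andP; split; lra.
have heq : v = (1/2) *: (\row_l (v 0 l + (if l == i then e else 0))) +
   (1 - 1/2) *: (\row_l (v 0 l + (if l == i then - e else 0))).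
  apply/rowP => l; rewrite !mxE; case: (l == i); lra.
have := hext _ _ _ hA hB ht heq.
move=> /rowP /(_ i); rewrite !mxE eqxx => h; lra.
Qed.

Definition isV (R : realFieldType) n (v : 'rV[R]_n) :=
  exists k M, [/\ M = 1 \/ M = 1/2, `|v 0 k| = M & forall i, i != k -> `|v 0 i| = 1 - M].

Definition scalrow (R : realFieldType) n (v : 'rV[R]_n) k (M d : R) : 'rV[R]_n :=
  \row_l (if l == k then v 0 l * ((M + d) / M) else v 0 l * ((1 - M - d) / (1 - M))).

Lemma pert2 (R : realFieldType) n (v : 'rV[R]_n) k (M d : R) :
  (forall i, i != k -> `|v 0 i| = 1 - M) -> `|v 0 k| = M -> 0 < M -> M < 1 ->
  0 <= M + d -> 0 <= 1 - M - d -> 2 * (1 - M - d) <= 1 ->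
  Pp (scalrow v k M d).
Proof.
move=> ho hk M0 M1 h1 h2 h3.
have nk : `|scalrow v k M d 0 k| = M + d.
  rewrite mxE eqxx normrM hk ger0_norm ?divr_ge0 //; last by lra.
  by field; rewrite gt_eqF.
have no : forall i, i != k -> `|scalrow v k M d 0 i| = 1 - M - d.
  move=> i ik; rewrite mxE (negbTE ik) normrM ho // ger0_norm ?divr_ge0 //; last by lra.
  by field; rewrite subr_eq0 eq_sym lt_eqF.
move=> p q pq.
case: (eqVneq p k) => [epk|pk]; case: (eqVneq q k) => [eqk|qk].
- by move: pq; rewrite epk eqk eqxx.
- rewrite epk nk no //; lra.
- rewrite eqk nk no //; lra.
- rewrite !no //; lra.
Qed.

Lemma vert_isV (R : realFieldType) n (hn : (2 < n)%N) (v : 'rV[R]_n) :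
  vertexDn v -> isV v.
Proof.
move=> hV; have hn1 : (1 < n)%N by lia.
have h0 : (0 < n)%N by lia.
have L1 := vert_L1 hn1 hV.
have hP := vor_Pp hV.1.
have [k _ kmax] := ex_argmax (P := xpredT) (fun j => `|v 0 j|) (i0 := Ordinal h0) isT.
set M := `|v 0 k| in kmax *.
have others : forall i, i != k -> `|v 0 i| = 1 - M.
  move=> i ik; have [j ji hj] := L1 i; have := kmax j isT; have := hP i k ik.
  rewrite /M; lra.
have [i1 /andP[i1k _]] := third_idx hn k k.
have [i2 /andP[i2k i2i1]] := third_idx hn k i1.
have hM1 : M <= 1 by have := others i1 i1k; have := normr_ge0 (v 0 i1); lra.
have hMh : 1/2 <= M.
  have := hP i1 i2 ltac:(by rewrite eq_sym); rewrite !others //; lra.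
case: (eqVneq M 1) => [M1|M1]; first by exists k, M; split => //; left.
case: (eqVneq M (1/2)) => [Mh|Mh]; first by exists k, M; split => //; right.
exfalso.
have hM1' : M < 1 by rewrite lt_neqAle M1.
have hMh' : 1/2 < M by rewrite lt_neqAle eq_sym Mh.
set e := (M - 1/2) * (1 - M).
have e0 : 0 < e by rewrite /e; nra.
have e1 : e <= (1 - M) / 2 by rewrite /e; nra.
have e2 : e <= (M - 1/2) / 2 by rewrite /e; nra.
have M0 : 0 < M by lra.
have hA := Pp_vor hn1 (pert2 (d := e) others erefl M0 hM1' ltac:(lra) ltac:(lra) ltac:(lra)).
have hB := Pp_vor hn1 (pert2 (d := - e) others erefl M0 hM1' ltac:(lra) ltac:(lra) ltac:(lra)).
have ht : 0 < (1/2 : R) < 1 by apply/andP; split; lra.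
have Mn0 : M != 0 by rewrite gt_eqF.
have M1n0 : 1 - M != 0 by rewrite subr_eq0 eq_sym.
have heq : v = (1/2) *: scalrow v k M e + (1 - 1/2) *: scalrow v k M (- e).
  apply/rowP => l; rewrite !mxE; case: (l == k); field => //.
have := hV.2 _ _ _ hA hB ht heq.
move=> /rowP /(_ k); rewrite !mxE eqxx => h.
have : v 0 k * (2 * e / M) = 0.
  have -> : v 0 k * (2 * e / M) = v 0 k * ((M + e) / M) - v 0 k * ((M + - e) / M) by field.
  by rewrite h subrr.
move/eqP; rewrite !mulf_eq0 invr_eq0 (negbTE Mn0) orbF.
case/or4P => /eqP h'; try lra.
have : M = 0 by rewrite /M h' normr0.
lra.
Qed.

Lemma mul_le_norm (R : realFieldType) (x y : R) : x * y <= `|x| * `|y|.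
Proof. by rewrite -normrM ler_norm. Qed.

Lemma isV_Pp (R : realFieldType) n (v : 'rV[R]_n) : isV v -> Pp v.
Proof.
move=> [k [M [hM hk ho]]] p q pq.
have hM' : 1/2 <= M by case: hM => ->; lra.
case: (eqVneq p k) => [epk|pk]; case: (eqVneq q k) => [eqk|qk].
- by move: pq; rewrite epk eqk eqxx.
- rewrite epk hk ho //; lra.
- rewrite eqk hk ho //; lra.
- rewrite !ho //; lra.
Qed.

Lemma ext_coord (R : realFieldType) n (hn : (2 < n)%N) (v a b : 'rV[R]_n) (t : R) :
  isV v -> Pp a -> Pp b -> 0 < t < 1 ->
  (forall l, v 0 l = t * a 0 l + (1 - t) * b 0 l) -> forall l, a 0 l = v 0 l.
Proof.
move=> [k [M [hM hk ho]]] ha hb ht hv.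
have hn1 : (1 < n)%N by lia.
case: hM => hM; rewrite hM in hk ho.
  have [j jk] := other_idx hn1 k.
  have vk2 : v 0 k * v 0 k = 1 by rewrite -expr2 sqr_of_norm hk expr1n.
  have bnd : forall c : 'rV[R]_n, Pp c -> v 0 k * c 0 k <= 1.
    move=> c hc; apply: le_trans (mul_le_norm _ _) _; rewrite hk mul1r.
    have := hc k j ltac:(by rewrite eq_sym); have := normr_ge0 (c 0 j); lra.
  have s1 : t * (v 0 k * a 0 k) + (1 - t) * (v 0 k * b 0 k) = 1.
    apply: etrans vk2; rewrite [X in _ = _ * X](hv k); ring.
  have ak1 := conv1 ht (bnd _ ha) (bnd _ hb) s1.
  have akv : a 0 k = v 0 k.
    by rewrite -[a 0 k]mul1r -vk2 -mulrA ak1 mulr1.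
  move=> l; case: (eqVneq l k) => [->//|lk].
  have := ha l k lk; rewrite akv hk => hl.
  have : `|a 0 l| = 0 by have := normr_ge0 (a 0 l); lra.
  move/eqP; rewrite normr_eq0 => /eqP ->.
  by have /eqP := ho l lk; rewrite subrr normr_eq0 => /eqP ->.
have hall : forall l, `|v 0 l| = 1/2.
  move=> l; case: (eqVneq l k) => [->//|lk]; rewrite ho //; lra.
have vl2 : forall l, v 0 l * v 0 l = 1/4.
  move=> l; rewrite -expr2 sqr_of_norm hall; lra.
have bnd : forall c : 'rV[R]_n, Pp c -> forall i j, i != j ->
    2 * v 0 i * c 0 i + 2 * v 0 j * c 0 j <= 1.
  move=> c hc i j ij.
  have := mul_le_norm (2 * v 0 i) (c 0 i); have := mul_le_norm (2 * v 0 j) (c 0 j).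
  rewrite !normrM hall hall (ger0_norm (_ : 0 <= 2)) //.
  have := hc i j ij; lra.
have U : forall i j, i != j -> 2 * v 0 i * a 0 i + 2 * v 0 j * a 0 j = 1.
  move=> i j ij; apply: (conv1 ht (bnd _ ha i j ij) (bnd _ hb i j ij)).
  apply: (etrans (_ : _ = 2 * (v 0 i * v 0 i) + 2 * (v 0 j * v 0 j))); last first.
    by rewrite !vl2; lra.
  rewrite [X in _ = 2 * (_ * X) + _](hv i) [X in _ = _ + 2 * (_ * X)](hv j); ring.
move=> l.
have [i1 /andP[i1l _]] := third_idx hn l l.
have [i2 /andP[i2l i2i1]] := third_idx hn l i1.
have u1 := U l i1 ltac:(by rewrite eq_sym). 
have u2 := U l i2 ltac:(by rewrite eq_sym).
have u3 := U i1 i2 ltac:(by rewrite eq_sym).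
have ul : 2 * v 0 l * a 0 l = 1/2 by lra.
have : a 0 l = 2 * v 0 l * (2 * v 0 l * a 0 l).
  have h := vl2 l.
  have -> : 2 * v 0 l * (2 * v 0 l * a 0 l) = 4 * (v 0 l * v 0 l) * a 0 l by ring.
  by rewrite h; field.
by rewrite ul => ->; field.
Qed.

Lemma isV_vert (R : realFieldType) n (hn : (2 < n)%N) (v : 'rV[R]_n) :
  isV v -> vertexDn v.
Proof.
move=> hV; have hn1 : (1 < n)%N by lia.
split; first exact: (Pp_vor hn1 (isV_Pp hV)).
move=> a b t ha hb ht hv.
have hv' : forall l, v 0 l = t * a 0 l + (1 - t) * b 0 l by move=> l; rewrite hv !mxE.
have hv'' : forall l, v 0 l = (1 - t) * b 0 l + (1 - (1 - t)) * a 0 l.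
  by move=> l; rewrite hv'; ring.
have ht' : 0 < 1 - t < 1 by move: ht => /andP[h1 h2]; apply/andP; split; lra.
apply/rowP => l.
rewrite (ext_coord hn hV (vor_Pp ha) (vor_Pp hb) ht hv' l).
by rewrite (ext_coord hn hV (vor_Pp hb) (vor_Pp ha) ht' hv'' l).
Qed.

Lemma abs_val (R : realFieldType) (x c : R) : 0 <= c -> `|x| = c -> x = c \/ x = - c.
Proof.
move=> c0; case: (lerP 0 x) => hx; [rewrite ger0_norm // | rewrite ltr0_norm //].
  by left.
by move=> <-; right; rewrite opprK.
Qed.

Lemma norm_pm (R : realFieldType) (x c : R) : 0 <= c -> x = c \/ x = - c -> `|x| = c.
Proof. by move=> c0 [->|->]; rewrite ?normrN ger0_norm. Qed.

Lemma zero_of_norm (R : realFieldType) (x : R) : `|x| = 1 - 1 -> x = 0.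
Proof. by rewrite subrr => /eqP; rewrite normr_eq0 => /eqP. Qed.

Lemma key_pair (R : realFieldType) n (hn : (1 < n)%N) (A B : 'rV[R]_n) :
  isV A -> isV B -> \row_l (A 0 l + B 0 l) != 0 -> ~ isV (\row_l (A 0 l + B 0 l)) ->
  exists i j, i != j /\ 2 <= `|A 0 i + B 0 i| + `|A 0 j + B 0 j|.
Proof.
move=> hA hB C0 nC.
case: (boolP [exists i, exists j, (i != j) && (2 <= `|A 0 i + B 0 i| + `|A 0 j + B 0 j|)]).
  by case/existsP => i /existsP [j /andP[ij h]]; exists i, j.
move/existsPn => H0.
have H : forall i j, i != j -> `|A 0 i + B 0 i| + `|A 0 j + B 0 j| < 2.
  by move=> i j ij; have /existsPn /(_ j) := H0 i; rewrite ij /= -ltNge.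
exfalso.
have isVC : forall k M, (M = 1 \/ M = 1/2) -> `|A 0 k + B 0 k| = M ->
    (forall i, i != k -> `|A 0 i + B 0 i| = 1 - M) -> False.
  move=> k M hM hk ho; apply: nC; exists k, M; split => //; first by rewrite mxE.
  by move=> i ik; rewrite mxE; exact: ho.
have zeroC : (forall l, A 0 l + B 0 l = 0) -> False.
  move=> hz; move/eqP: C0; apply; apply/rowP => l; rewrite !mxE; exact: hz.
have h0 : (0 : R) <= 1 by lra.
have h12 : (0 : R) <= 1/2 by lra.
move: hA hB => [k [M [hM hk ho]]] [k' [M' [hM' hk' ho']]].
case: hM => eM; case: hM' => eM'; rewrite eM in hk ho; rewrite eM' in hk' ho'.
- have Az : forall l, l != k -> A 0 l = 0 by move=> l lk; apply: zero_of_norm; exact: ho.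
  have Bz : forall l, l != k' -> B 0 l = 0 by move=> l lk; apply: zero_of_norm; exact: ho'.
  case: (eqVneq k k') => [ekk|kk'].
    rewrite -ekk in hk' Bz.
    have [j jk] := other_idx hn k.
    have : A 0 k + B 0 k = 0 \/ `|A 0 k + B 0 k| = 2.
      have [ak|ak] := abs_val h0 hk; have [bk|bk] := abs_val h0 hk'; rewrite ak bk;
        try (by left; lra); by right; apply: norm_pm; lra.
    case=> [c0|c2].
      by apply: zeroC => l; case: (eqVneq l k) => [->//|lk]; rewrite Az // Bz // addr0.
    have := H k j ltac:(by rewrite eq_sym); rewrite c2 Az // Bz // addr0 normr0; lra.
  have := H k k' kk'; rewrite (Bz k kk') (Az k') ?addr0 ?add0r ?hk ?hk'; last by rewrite eq_sym.
  lra.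
- have Az : forall l, l != k -> A 0 l = 0 by move=> l lk; apply: zero_of_norm; exact: ho.
  have Ball : forall l, `|B 0 l| = 1/2.
    by move=> l; case: (eqVneq l k') => [->//|lk]; rewrite ho' //; lra.
  have [j jk] := other_idx hn k.
  have : `|A 0 k + B 0 k| = 3/2 \/ `|A 0 k + B 0 k| = 1/2.
    have [ak|ak] := abs_val h0 hk; have [bk|bk] := abs_val h12 (Ball k); rewrite ak bk;
      try (by left; apply: norm_pm; lra); by right; apply: norm_pm; lra.
  case=> hc.
    have := H k j ltac:(by rewrite eq_sym); rewrite hc Az // add0r Ball; lra.
  apply: (isVC k (1/2)) => //; first by right.
  by move=> i ik; rewrite Az // add0r Ball; lra.
- have Bz : forall l, l != k' -> B 0 l = 0 by move=> l lk; apply: zero_of_norm; exact: ho'.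
  have Aall : forall l, `|A 0 l| = 1/2.
    by move=> l; case: (eqVneq l k) => [->//|lk]; rewrite ho //; lra.
  have [j jk] := other_idx hn k'.
  have : `|A 0 k' + B 0 k'| = 3/2 \/ `|A 0 k' + B 0 k'| = 1/2.
    have [ak|ak] := abs_val h12 (Aall k'); have [bk|bk] := abs_val h0 hk'; rewrite ak bk;
      try (by left; apply: norm_pm; lra); by right; apply: norm_pm; lra.
  case=> hc.
    have := H k' j ltac:(by rewrite eq_sym); rewrite hc Bz // addr0 Aall; lra.
  apply: (isVC k' (1/2)) => //; first by right.
  by move=> i ik; rewrite Bz // addr0 Aall; lra.
- have Aall : forall l, `|A 0 l| = 1/2.
    by move=> l; case: (eqVneq l k) => [->//|lk]; rewrite ho //; lra.
  have Ball : forall l, `|B 0 l| = 1/2.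
    by move=> l; case: (eqVneq l k') => [->//|lk]; rewrite ho' //; lra.
  have cs : forall l, A 0 l + B 0 l = 0 \/ `|A 0 l + B 0 l| = 1.
    move=> l; have [ak|ak] := abs_val h12 (Aall l); have [bk|bk] := abs_val h12 (Ball l);
      rewrite ak bk; try (by left; lra); by right; apply: norm_pm; lra.
  case: (boolP [exists l, A 0 l + B 0 l != 0]) => [/existsP [k0 hk0] | /existsPn Hz];
    last by apply: zeroC => l; apply/eqP; have := Hz l; rewrite negbK.
  have ck0 : `|A 0 k0 + B 0 k0| = 1.
    by case: (cs k0) => // e0; move: hk0; rewrite e0 eqxx.
  apply: (isVC k0 1 (or_introl erefl) ck0) => i ik.
  have := H k0 i ltac:(by rewrite eq_sym); rewrite ck0.
  case: (cs i) => [->|->]; rewrite ?normr0 ?subrr //; lra.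
Qed.

Unset Implicit Arguments.

Theorem lemma14 (R : realFieldType) (n : nat) (hn : (4 <= n)%N)
  (u1 u2 : 'rV[R]_n) :
  Gvert u1 -> Gvert u2 -> gdist_eq u1 u2 2 -> normP_eq (u1 - u2) 1.
Proof.
move=> G1 G2 [[w [w0 w2 wG wA]] nw].
have hn3 : (2 < n)%N by lia.
have hn1 : (1 < n)%N by lia.
have hA : isV (2%:R *: (w 0%N - w 1%N)) := vert_isV hn3 (wA 0%N isT).
have hB : isV (2%:R *: (w 1%N - w 2%N)) := vert_isV hn3 (wA 1%N isT).
set A := 2%:R *: (w 0%N - w 1%N) in hA.
set B := 2%:R *: (w 1%N - w 2%N) in hB.
have eC : 2%:R *: (u1 - u2) = \row_l (A 0 l + B 0 l).
  by apply/rowP => l; rewrite -w0 -w2 /A /B !mxE; ring.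
have Cn0 : \row_l (A 0 l + B 0 l) != 0.
  rewrite -eC; apply/eqP => h; apply: (nw 0%N isT).
  have e12 : u1 = u2.
    by move/eqP: h; rewrite scaler_eq0 pnatr_eq0 /= subr_eq0 => /eqP.
  by exists (fun _ => u1); split => // i _; rewrite -e12.
have nCV : ~ isV (\row_l (A 0 l + B 0 l)).
  rewrite -eC => hC; apply: (nw 1%N isT).
  exists (fun i => if i == 0%N then u1 else u2); split => //.
    by case=> [|[|i]] //= _.
  by case=> //= _; rewrite /Gadj /half; exact: (isV_vert hn3 hC).
have [i [j [ij hij]]] := key_pair hn1 hA hB Cn0 nCV.
have hd : forall l, `|(u1 - u2) 0 l| = `|A 0 l + B 0 l| / 2.
  move=> l; have := congr1 (fun M : 'rV[R]_n => M 0 l) eC; rewrite /= !mxE => <-.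
  by rewrite normrM ger0_norm //; field.
split.
  move=> l l0 [z [hz hdz]].
  have := vor_Pp hz ij.
  have ez : forall p, `|(u1 - u2) 0 p| = l * `|z 0 p|.
    by move=> p; rewrite hdz mxE normrM ger0_norm.
  move: (ez i) (ez j); rewrite !hd => ei ej hz1.
  have : 1 <= l * (`|z 0 i| + `|z 0 j|) by lra.
  nra.
move=> b hb; apply: hb; first lra.
exists (u1 - u2); split; last by rewrite scale1r.
apply: (Pp_vor hn1) => p q pq; rewrite !hd.
have := isV_Pp hA pq; have := isV_Pp hB pq.
have := ler_normD (A 0 p) (B 0 p); have := ler_normD (A 0 q) (B 0 q); lra.
Qed.
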